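(* Let $F\colon\Omega\to\Omega$ be a piecewise translation in $\mathbb{R}^d$ with $m=d+1$ branches whose translation vectors $v_0,\dots,v_d$ have the property that any $d$ of them are linearly independent. Then for every $x\in\Omega$ and every $j\in\{0,\dots,d\}$ the set $\{n\ge0 : i(F^n(x))=j\}$ is infinite.
   Context: A region is a compact subset of $\mathbb{R}^d$ which equals the closure of its interior. A piecewise translation with $m$ branches: $\Omega\subset\mathbb{R}^d$ is a region, $\Omega=P_0\cup\dots\cup P_{m-1}$ with each $P_i$ a region, distinct $P_i$ intersecting only in boundaries, $\mathrm{Leb}(\partial P_i)=0$; vectors $v_i$ satisfy $x+v_i\in\Omega$ for $x\in P_i$; $i(x)$ is an index with $x\in P_{i(x)}$ (boundary ambiguity resolved by a fixed measurable rule), and $F(x)=x+v_{i(x)}$. *)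

(* Defs.v *)
From Stdlib Require Import Reals.
From Stdlib Require Fin.
Open Scope R_scope.

Definition pt (d : nat) := Fin.t d -> R.

Definition vadd {d : nat} (x y : pt d) : pt d := fun k => x k + y k.

(* y lies in the open sup-norm ball of radius r around x
   (sup-norm balls generate the usual topology of R^d). *)
Definition near {d : nat} (r : R) (x y : pt d) : Prop :=
  forall k : Fin.t d, Rabs (x k - y k) < r.

Definition interior {d : nat} (S : pt d -> Prop) (x : pt d) : Prop :=
  exists r, 0 < r /\ forall y, near r x y -> S y.

Definition closure {d : nat} (S : pt d -> Prop) (x : pt d) : Prop :=
  forall r, 0 < r -> exists y, S y /\ near r x y.

Definition boundary {d : nat} (S : pt d -> Prop) (x : pt d) : Prop :=
  closure S x /\ ~ interior S x.

Definition is_closed {d : nat} (S : pt d -> Prop) : Prop :=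
  forall x, closure S x -> S x.

Definition bounded {d : nat} (S : pt d -> Prop) : Prop :=
  exists M, forall x, S x -> forall k, Rabs (x k) <= M.

(* compact subset of R^d (Heine-Borel: closed and bounded) *)
Definition compact {d : nat} (S : pt d -> Prop) : Prop :=
  is_closed S /\ bounded S.

Definition region {d : nat} (S : pt d -> Prop) : Prop :=
  compact S /\ forall x, S x <-> closure (interior S) x.

Fixpoint prod_fin (n : nat) : (Fin.t n -> R) -> R :=
  match n return (Fin.t n -> R) -> R with
  | O => fun _ => 1
  | S n' => fun f => f Fin.F1 * prod_fin n' (fun i => f (Fin.FS i))
  end.

Definition box_vol {d : nat} (a b : pt d) : R := prod_fin d (fun k => b k - a k).

Definition in_box {d : nat} (a b y : pt d) : Prop :=
  forall k, a k <= y k <= b k.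

Definition leb_null {d : nat} (S : pt d -> Prop) : Prop :=
  forall eps, 0 < eps ->
    exists a b : nat -> pt d,
      (forall n k, a n k <= b n k) /\
      (forall x, S x -> exists n, in_box (a n) (b n) x) /\
      (forall N, sum_f_R0 (fun n => box_vol (a n) (b n)) N <= eps).

(* Piecewise translation Omega = P_0 u ... u P_(m-1) with vectors v_i and
   index rule idx (branches indexed by naturals 0..m-1). *)
Definition piecewise_translation {d : nat} (m : nat) (Omega : pt d -> Prop)
    (P : nat -> pt d -> Prop) (v : nat -> pt d) (idx : pt d -> nat) : Prop :=
  region Omega /\
  (forall i, (i < m)%nat -> region (P i)) /\
  (forall x, Omega x <-> exists i, (i < m)%nat /\ P i x) /\
  (forall i j x, (i < m)%nat -> (j < m)%nat -> i <> j -> P i x -> P j x ->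
      boundary (P i) x /\ boundary (P j) x) /\
  (forall i, (i < m)%nat -> leb_null (boundary (P i))) /\
  (forall i x, (i < m)%nat -> P i x -> Omega (vadd x (v i))) /\
  (forall x, Omega x -> (idx x < m)%nat /\ P (idx x) x).

Definition pt_map {d : nat} (v : nat -> pt d) (idx : pt d -> nat) (x : pt d) : pt d :=
  vadd x (v (idx x)).

Definition lin_indep_except {d : nat} (v : nat -> pt d) (j : nat) : Prop :=
  forall c : nat -> R,
    (forall k : Fin.t d,
        sum_f_R0 (fun i => if Nat.eqb i j then 0 else c i * v i k) d = 0) ->
    forall i, (i <= d)%nat -> i <> j -> c i = 0.

(* Main.v *)
Require Import Defs.
From Stdlib Require Import Reals Lra Lia Arith Classical.
From Stdlib Require Fin.
Open Scope R_scope.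

Fixpoint msum (n:nat) (f:nat->R) : R :=
  match n with O => 0 | S n' => f O + msum n' (fun i => f (S i)) end.

Lemma msum_ext n : forall f g, (forall i, (i<n)%nat -> f i = g i) -> msum n f = msum n g.
Proof.
  induction n; intros f g H; simpl; auto.
  rewrite (H 0%nat) by lia. f_equal. apply IHn. intros; apply H; lia.
Qed.

Lemma msum_plus n : forall f g, msum n (fun i => f i + g i) = msum n f + msum n g.
Proof. induction n; intros; simpl; [lra|]. rewrite IHn. lra. Qed.

Lemma msum_scal n : forall r f, msum n (fun i => r * f i) = r * msum n f.
Proof. induction n; intros; simpl; [lra|]. rewrite IHn. lra. Qed.

Lemma msum_zero n : msum n (fun _ => 0) = 0.
Proof. induction n; simpl; [lra|]. rewrite IHn. lra. Qed.

Lemma msum_abs_le n : forall f b, (forall i, (i<n)%nat -> Rabs (f i) <= b) ->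
  Rabs (msum n f) <= INR n * b.
Proof.
  induction n; intros f b H; cbn [msum].
  - rewrite Rabs_R0. simpl INR. lra.
  - rewrite S_INR. eapply Rle_trans. apply Rabs_triang.
    assert (H0 := H 0%nat ltac:(lia)).
    assert (H1 := IHn (fun i => f (S i)) b ltac:(intros; apply H; lia)).
    lra.
Qed.

Lemma msum_le n : forall f b, (forall i, (i<n)%nat -> f i <= b) ->
  msum n f <= INR n * b.
Proof.
  induction n; intros f b H; cbn [msum].
  - simpl INR. lra.
  - rewrite S_INR.
    assert (H0 := H 0%nat ltac:(lia)).
    assert (H1 := IHn (fun i => f (S i)) b ltac:(intros; apply H; lia)).
    lra.
Qed.

Lemma msum_last n : forall f, msum (S n) f = msum n f + f n.
Proof.
  induction n; intros; simpl in *. lra.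
  rewrite (IHn (fun i => f (S i))). simpl. lra.
Qed.

Lemma sum_f_msum g n : sum_f_R0 g n = msum (S n) g.
Proof. induction n. simpl; lra. rewrite msum_last. simpl sum_f_R0. rewrite IHn. reflexivity. Qed.

Definition skip (j i : nat) : nat := if Nat.ltb i j then i else S i.

Lemma msum_skip d : forall j h, (j <= d)%nat ->
  msum (S d) (fun i => if Nat.eqb i j then 0 else h i) = msum d (fun i => h (skip j i)).
Proof.
  induction d; intros j h Hj.
  - assert (j = 0%nat) by lia. subst. simpl. lra.
  - destruct j as [|j'].
    + change (msum (S (S d)) (fun i => if Nat.eqb i 0 then 0 else h i))
        with (0 + msum (S d) (fun i => if Nat.eqb (S i) 0 then 0 else h (S i))).
      rewrite Rplus_0_l. apply msum_ext. intros i _. unfold skip. destruct i; reflexivity.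
    + change (msum (S (S d)) (fun i => if Nat.eqb i (S j') then 0 else h i))
        with (h 0%nat + msum (S d) (fun i => if Nat.eqb i j' then 0 else h (S i))).
      rewrite (IHd j' (fun i => h (S i))) by lia.
      simpl. unfold skip. f_equal. apply msum_ext. intros i _. change (Nat.ltb (S i) (S j')) with (Nat.ltb i j'). destruct (Nat.ltb i j'); reflexivity.
Qed.

Lemma msum_bump n : forall t f g, (t < n)%nat ->
  msum n (fun i => f i + (if Nat.eqb i t then g i else 0)) = msum n f + g t.
Proof.
  induction n; intros t f g Ht; [lia|]. simpl.
  destruct t as [|t'].
  - simpl. rewrite (msum_ext n _ (fun i => f (S i))). lra.
    intros; simpl; lra.
  - simpl. rewrite (IHn t' (fun i => f (S i)) (fun i => g (S i))) by lia. lra.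
Qed.

Lemma Rabs_sub_le (x y : R) : Rabs (x - y) <= Rabs x + Rabs y.
Proof. unfold Rminus. eapply Rle_trans. apply Rabs_triang. rewrite Rabs_Ropp. lra. Qed.

Lemma Rdiv_le_0_compat (x y : R) : 0 <= x -> 0 < y -> 0 <= x / y.
Proof. intros. unfold Rdiv. apply Rmult_le_pos; auto. left; apply Rinv_0_lt_compat; auto. Qed.

Lemma elim_lemma (Row : Type) n : forall (a : nat -> Row -> R) A,
  (forall i k, (i<n)%nat -> Rabs (a i k) <= A) ->
  (exists c : nat -> R, (exists i, (i<n)%nat /\ c i <> 0) /\
      forall k, msum n (fun i => c i * a i k) = 0)
  \/ (exists K, 0 <= K /\ forall (c : nat -> R) B, 0 <= B ->
       (forall k, Rabs (msum n (fun i => c i * a i k)) <= B) ->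
       forall i, (i<n)%nat -> Rabs (c i) <= K*B).
Proof.
  induction n; intros a A HA.
  - right. exists 0. split. lra. intros; lia.
  - destruct (classic (exists k0, a 0%nat k0 <> 0)) as [[k0 Hk0]|Hno].
    2:{ left. exists (fun i => match i with O => 1 | _ => 0 end). split.
        - exists 0%nat. split. lia. lra.
        - intro k. cbn [msum].
          assert (a 0%nat k = 0) by (apply NNPP; intro; apply Hno; eauto).
          rewrite H. rewrite (msum_ext n _ (fun _ => 0)) by (intros; lra).
          rewrite msum_zero. lra. }
    set (p := a 0%nat k0) in *.
    assert (Hp : 0 < Rabs p) by (apply Rabs_pos_lt; auto).
    assert (HA0 : 0 <= A) by (eapply Rle_trans; [apply Rabs_pos| apply (HA 0%nat k0); lia]).
    set (a' := fun i k => a (S i) k - a 0%nat k * a (S i) k0 / p).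
    assert (HA' : forall i k, (i<n)%nat -> Rabs (a' i k) <= A + A*A/Rabs p).
    { intros i k Hi. unfold a'.
      assert (h1 := HA (S i) k ltac:(lia)).
      assert (h2 := HA 0%nat k ltac:(lia)).
      assert (h3 := HA (S i) k0 ltac:(lia)).
      eapply Rle_trans. apply Rabs_sub_le.
      unfold Rdiv. rewrite !Rabs_mult, Rabs_inv.
      assert (Rabs (a 0%nat k) * Rabs (a (S i) k0) <= A * A).
      { apply Rmult_le_compat; auto using Rabs_pos. }
      assert (0 < / Rabs p) by (apply Rinv_0_lt_compat; auto).
      assert (Rabs (a 0%nat k) * Rabs (a (S i) k0) * / Rabs p <= A * A * / Rabs p).
      { apply Rmult_le_compat_r; lra. }
      lra. }
    destruct (IHn a' _ HA') as [[c' [[i0 [Hi0 Hc0]] Hker]] | [K' [HK' HB]]].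
    + left.
      exists (fun i => match i with O => - msum n (fun i => c' i * a (S i) k0) / p | S i => c' i end).
      split. { exists (S i0). split. lia. auto. }
      intro k. cbn [msum].
      assert (E := Hker k). unfold a' in E.
      rewrite (msum_ext n _ (fun i => c' i * a (S i) k + (- (a 0%nat k / p)) * (c' i * a (S i) k0))) in E
        by (intros; field; intro; lra).
      rewrite msum_plus, msum_scal in E.
      set (T := msum n (fun i => c' i * a (S i) k0)) in *.
      set (U := msum n (fun i => c' i * a (S i) k)) in *.
      assert (HU : U = a 0%nat k / p * T) by lra.
      rewrite HU. field. intro; lra.
    + right.
      set (Kc := K' * (1 + A / Rabs p)).
      assert (HKc : 0 <= Kc).
      { unfold Kc. apply Rmult_le_pos; auto.
        assert (0 <= A / Rabs p) by (apply Rdiv_le_0_compat; lra). lra. }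
      exists (Kc + (1 + INR n * A * Kc) / Rabs p).
      assert (HX : 0 <= (1 + INR n * A * Kc) / Rabs p).
      { apply Rdiv_le_0_compat; [|lra].
        assert (0 <= INR n * A * Kc) by (apply Rmult_le_pos; [apply Rmult_le_pos|]; auto using pos_INR).
        lra. }
      split. lra.
      intros c B HB0 Hy.
      assert (Hred : forall k, msum n (fun i => c (S i) * a' i k) =
          msum (S n) (fun i => c i * a i k) - a 0%nat k / p * msum (S n) (fun i => c i * a i k0)).
      { intro k. cbn [msum]. unfold a'.
        rewrite (msum_ext n _ (fun i => c (S i) * a (S i) k + (- (a 0%nat k / p)) * (c (S i) * a (S i) k0)))
          by (intros; field; intro; lra).
        rewrite msum_plus, msum_scal. fold p. field. intro; lra. }
      assert (Hcs : forall i, (i < n)%nat -> Rabs (c (S i)) <= Kc * B).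
      { intros i Hi. unfold Kc. rewrite Rmult_assoc.
        apply (HB (fun i => c (S i))); auto.
        { apply Rmult_le_pos; auto. assert (0 <= A / Rabs p) by (apply Rdiv_le_0_compat; lra). lra. }
        intro k. rewrite Hred.
        eapply Rle_trans. apply Rabs_sub_le.
        unfold Rdiv. rewrite !Rabs_mult, Rabs_inv.
        assert (h1 := Hy k). assert (h2 := Hy k0).
        assert (h3 := HA 0%nat k ltac:(lia)).
        assert (0 < / Rabs p) by (apply Rinv_0_lt_compat; auto).
        assert (Rabs (a 0%nat k) * / Rabs p * Rabs (msum (S n) (fun i => c i * a i k0)) <= A * / Rabs p * B).
        { apply Rmult_le_compat; auto using Rabs_pos.
          apply Rmult_le_pos; auto using Rabs_pos; lra.
          apply Rmult_le_compat_r; lra. }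
        lra. }
      intros i Hi. destruct i as [|i].
      * assert (h2 := Hy k0). cbn [msum] in h2.
        set (U := msum n (fun i => c (S i) * a (S i) k0)) in *.
        assert (HU : Rabs U <= INR n * (Kc * B * A)).
        { apply msum_abs_le. intros i Hi'. rewrite Rabs_mult.
          apply Rmult_le_compat; auto using Rabs_pos. apply HA; lia. }
        assert (Ec : c 0%nat = (c 0%nat * p + U - U) / p) by (field; intro; lra).
        rewrite Ec. unfold Rdiv. rewrite Rabs_mult, Rabs_inv.
        assert (Rabs (c 0%nat * p + U - U) <= B + INR n * (Kc * B * A)).
        { eapply Rle_trans. apply Rabs_sub_le. fold p in h2. lra. }
        assert (0 < / Rabs p) by (apply Rinv_0_lt_compat; auto).
        assert (Rabs (c 0%nat * p + U - U) * / Rabs p <= (B + INR n * (Kc * B * A)) * / Rabs p)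
          by (apply Rmult_le_compat_r; lra).
        assert (E2 : (B + INR n * (Kc * B * A)) * / Rabs p = (1 + INR n * A * Kc) / Rabs p * B)
          by (field; lra).
        assert (0 <= Kc * B) by (apply Rmult_le_pos; auto).
        nra.
      * assert (h := Hcs i ltac:(lia)).
        assert (0 <= (1 + INR n * A * Kc) / Rabs p * B) by (apply Rmult_le_pos; auto).
        nra.
Qed.

Lemma fin_bound d : forall g : Fin.t d -> R, exists M, forall k, Rabs (g k) <= M.
Proof.
  induction d; intros g.
  - exists 0. intro k. inversion k.
  - destruct (IHd (fun k => g (Fin.FS k))) as [M HM].
    exists (Rmax (Rabs (g Fin.F1)) M). intro k.
    apply (Fin.caseS' k (fun k => Rabs (g k) <= _)).
    + apply Rmax_l.
    + intro q. eapply Rle_trans. apply HM. apply Rmax_r.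
Qed.

Lemma vec_bound {d} (f : nat -> pt d) n : exists A, forall i k, (i < n)%nat -> Rabs (f i k) <= A.
Proof.
  induction n.
  - exists 0. intros; lia.
  - destruct IHn as [A HA]. destruct (fin_bound d (f n)) as [M HM].
    exists (Rmax A M). intros i k Hi.
    destruct (Nat.eq_dec i n). subst. eapply Rle_trans; [apply HM|apply Rmax_r].
    eapply Rle_trans; [apply HA; lia|apply Rmax_l].
Qed.

Theorem proposition2p4 (d : nat) (Omega : pt d -> Prop) (P : nat -> pt d -> Prop)
  (v : nat -> pt d) (idx : pt d -> nat) :
  piecewise_translation (S d) Omega P v idx ->
  (forall j, (j <= d)%nat -> lin_indep_except v j) ->
  forall x, Omega x ->
  forall j, (j <= d)%nat ->
  forall N : nat, exists n, (N <= n)%nat /\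
    idx (Nat.iter n (pt_map v idx) x) = j.
Proof.
  intros HPT Hind x Hx j Hj N.
  destruct HPT as [[[_ [M HM]] _] [_ [_ [_ [_ [Hv Hidx]]]]]].
  set (F := pt_map v idx).
  assert (Horb : forall n, Omega (Nat.iter n F x)).
  { induction n. exact Hx. rewrite Nat.iter_succ.
    destruct (Hidx _ IHn) as [H1 H2]. apply Hv; auto. }
  apply NNPP. intro Hno.
  assert (Hne : forall n, (N <= n)%nat -> idx (Nat.iter n F x) <> j)
    by (intros n Hn E; apply Hno; eauto).
  set (y0 := Nat.iter N F x).
  assert (C : forall n, exists c : nat -> R,
    (forall k, Nat.iter (n + N) F x k - y0 k = msum d (fun i => c i * v (skip j i) k))
    /\ msum d c = INR n).
  { induction n.
    - exists (fun _ => 0). split.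
      + intro k. rewrite (msum_ext d _ (fun _ => 0)) by (intros; lra).
        rewrite msum_zero. simpl. unfold y0. lra.
      + rewrite msum_zero. reflexivity.
    - destruct IHn as [c [Hc1 Hc2]].
      set (z := Nat.iter (n + N) F x).
      destruct (Hidx z (Horb _)) as [Hi0 _].
      assert (Hi0j : idx z <> j) by (apply Hne; lia).
      set (i0 := idx z) in *.
      set (t := if Nat.ltb i0 j then i0 else pred i0).
      assert (Ht : (t < d)%nat /\ skip j t = i0).
      { unfold t, skip. destruct (Nat.ltb i0 j) eqn:E.
        - apply Nat.ltb_lt in E. rewrite (proj2 (Nat.ltb_lt i0 j) E). split; lia.
        - apply Nat.ltb_ge in E. assert (Nat.ltb (pred i0) j = false) by (apply Nat.ltb_ge; lia).
          rewrite H. split; lia. }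
      destruct Ht as [Ht1 Ht2].
      exists (fun i => c i + (if Nat.eqb i t then 1 else 0)). split.
      + intro k.
        rewrite (msum_ext d _ (fun i => c i * v (skip j i) k + (if Nat.eqb i t then v (skip j i) k else 0)))
          by (intros i _; destruct (Nat.eqb i t); lra).
        rewrite msum_bump by auto. rewrite <- Hc1.
        change (Nat.iter (S n + N) F x) with (F z).
        unfold F at 1, pt_map, vadd. fold i0. rewrite Ht2. fold z. lra.
      + rewrite msum_bump by auto. rewrite Hc2, S_INR. lra. }
  destruct (vec_bound (fun i => v (skip j i)) d) as [A HA].
  destruct (elim_lemma (Fin.t d) d (fun i k => v (skip j i) k) A HA)
    as [[c' [[i0 [Hi0 Hc0]] Hker]] | [K [HK HB]]].
  - set (cc := fun i => if Nat.ltb i j then c' i else c' (pred i)).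
    assert (Hcc : forall i, cc (skip j i) = c' i).
    { intro i. unfold cc, skip. destruct (Nat.ltb i j) eqn:E. rewrite E; auto.
      apply Nat.ltb_ge in E. assert (Nat.ltb (S i) j = false) by (apply Nat.ltb_ge; lia).
      rewrite H. reflexivity. }
    apply Hc0. rewrite <- Hcc. apply (Hind j Hj cc).
    + intro k. rewrite sum_f_msum.
      rewrite (msum_skip d j (fun i => cc i * v i k)) by auto.
      rewrite <- (Hker k). apply msum_ext. intros i _. rewrite Hcc. reflexivity.
    + unfold skip. destruct (Nat.ltb i0 j); lia.
    + unfold skip. destruct (Nat.ltb i0 j) eqn:E. apply Nat.ltb_lt in E; lia.
      apply Nat.ltb_ge in E; lia.
  - set (B := 2 * Rabs M).
    destruct (INR_unbounded (INR d * (K * B))) as [n Hn].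
    destruct (C n) as [c [Hc1 Hc2]].
    assert (Hbd : forall i, (i < d)%nat -> Rabs (c i) <= K * B).
    { apply HB. unfold B. assert (0 <= Rabs M) by apply Rabs_pos. lra.
      intro k. rewrite <- Hc1.
      assert (h1 := HM _ (Horb (n + N)%nat) k).
      assert (h2 := HM _ (Horb N) k). fold y0 in h2.
      assert (M <= Rabs M) by apply RRle_abs.
      unfold B. eapply Rle_trans. apply Rabs_sub_le. lra. }
    assert (msum d c <= INR d * (K * B)).
    { apply msum_le. intros i Hi. eapply Rle_trans. apply RRle_abs. auto. }
    lra.
Qed.
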